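(* Let $n\ge 1$ and $m\ge 2$ be integers with $m\nmid n$, and let $\chi_{n,m}\colon\mathbb{F}_2^n\to\mathbb{F}_2^n$ be given by $\chi_{n,m}(x)=y$ with $y_i=x_i+x_{i+m}(x_{i+m-1}+1)(x_{i+m-2}+1)\cdots(x_{i+1}+1)$ for $i\in\{0,\dots,n-1\}$, indices modulo $n$. Then $\chi_{n,m}$ is an involution (i.e. $\chi_{n,m}\circ\chi_{n,m}$ is the identity) if and only if $n\le 2m-1$. *)

(* Defs.v *)
(* Vectors of F_2^n are encoded as finite functions
   {ffun 'I_n -> bool}; F_2 addition is xor (addb), multiplication is &&,
   and (x + 1) is negb x. *)
From mathcomp Require Import all_boot.
Set Implicit Arguments. Unset Strict Implicit. Unset Printing Implicit Defensive.

(* reading the coordinate of index k modulo n, given some i : 'I_n witnessing n > 0 *)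
Definition coord_mod (n : nat) (i : 'I_n) (x : {ffun 'I_n -> bool}) (k : nat) : bool :=
  x (@Ordinal n (k %% n) (ltn_pmod k (leq_ltn_trans (leq0n i) (ltn_ord i)))).

Definition chi (n m : nat) (x : {ffun 'I_n -> bool}) : {ffun 'I_n -> bool} :=
  [ffun i : 'I_n => addb (x i)
     (coord_mod i x (i + m) && \big[andb/true]_(1 <= j < m) ~~ coord_mod i x (i + j))].

(* Main.v *)
Require Import Defs.
From mathcomp Require Import all_boot.
From mathcomp Require Import zify.
Set Implicit Arguments. Unset Strict Implicit. Unset Printing Implicit Defensive.

Definition A n (Hn : 0 < n) (x : {ffun 'I_n -> bool}) k : bool :=
  x (Ordinal (ltn_pmod k Hn)).
Definition Pp n (Hn : 0 < n) m (x : {ffun 'I_n -> bool}) k : bool :=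
  A Hn x (k + m) && \big[andb/true]_(1 <= j < m) ~~ A Hn x (k + j).

Lemma coordE n (i : 'I_n) Hn x k : coord_mod i x k = A Hn x k.
Proof. by rewrite /coord_mod /A; congr (x _); apply: val_inj. Qed.

Lemma A_congr n Hn x a b : a %% n = b %% n -> @A n Hn x a = A Hn x b.
Proof. by move=> e; rewrite /A; congr (x _); apply: val_inj => /=. Qed.

Lemma A_addn n Hn x a : @A n Hn x (a + n) = A Hn x a.
Proof. by apply: A_congr; rewrite modnDr. Qed.

Lemma A_ord n Hn x (i : 'I_n) : @A n Hn x i = x i.
Proof. by rewrite /A; congr (x _); apply: val_inj; rewrite /= modn_small. Qed.

Lemma PpP n Hn m x k : reflect (A Hn x (k + m) /\ forall j, 0 < j < m -> A Hn x (k + j) = false)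
  (@Pp n Hn m x k).
Proof.
rewrite /Pp big_all; apply: (iffP andP) => [[h1 /allP h2]|[h1 h2]]; split => //.
  by move=> j hj; apply/negbTE/h2; rewrite mem_index_iota.
by apply/allP => j; rewrite mem_index_iota => hj; rewrite h2.
Qed.

Lemma Pp_mod n Hn m x k : @Pp n Hn m x (k %% n) = Pp Hn m x k.
Proof.
rewrite /Pp (@A_congr _ _ _ (k %% n + m) (k + m)); last by rewrite modnDml.
congr (_ && _); apply: eq_bigr => j _; congr (~~ _); apply: A_congr; by rewrite modnDml.
Qed.

Lemma chiA n Hn m x k : A Hn (chi m x) k = A Hn x k (+) @Pp n Hn m x k.
Proof.
transitivity (A Hn x (k %% n) (+) Pp Hn m x (k %% n));
  last by rewrite Pp_mod (A_congr Hn x (modn_mod k n)).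
rewrite {1}/A ffunE /Pp !(fun i => coordE i Hn).
apply: congr2.
  by rewrite /A; congr (x _); apply: val_inj; rewrite /= modn_mod.
by under eq_bigr => j _ do rewrite (coordE _ Hn).
Qed.

Lemma Pp_ext n Hn m x y k : 0 < m ->
  (forall j, 0 < j <= m -> A Hn y (k + j) = A Hn x (k + j)) ->
  @Pp n Hn m y k = Pp Hn m x k.
Proof.
move=> hm h; apply/idP/idP => /PpP [h1 h2]; apply/PpP; split.
- by rewrite -h // hm leqnn.
- by move=> j hj; rewrite -h ?h2 //; lia.
- by rewrite h // hm leqnn.
- by move=> j hj; rewrite h ?h2 //; lia.
Qed.

Lemma Pp_addn n Hn m x k : @Pp n Hn m x (k + n) = Pp Hn m x k.
Proof. by rewrite -Pp_mod modnDr Pp_mod. Qed.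

Lemma noclash n Hn m x k d : 2 <= m -> m < n -> n <= 2 * m - 1 ->
  @Pp n Hn m x k -> 0 < d <= m -> Pp Hn m x (k + d) = false.
Proof.
move=> hm hmn hn /PpP [a1 a2] hd; apply/negbTE/negP => /PpP [b1 b2].
case: (ltnP d m) => hdm.
- have := b2 (m - d) ltac:(lia).
  by rewrite (_ : k + d + (m - d) = k + m) ?a1 //; lia.
- have := a2 (2 * m - n) ltac:(lia).
  by rewrite -A_addn (_ : k + (2 * m - n) + n = k + d + m) ?b1 //; lia.
Qed.

Lemma key n Hn m x k : 2 <= m -> m < n -> n <= 2 * m - 1 ->
  @Pp n Hn m (chi m x) k = Pp Hn m x k.
Proof.
move=> hm hmn hn.
case Hp: (Pp Hn m x k).
  rewrite (Pp_ext (x := x)) //; first lia.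
  by move=> j hj; rewrite chiA noclash ?addbF.
apply/negbTE/negP => Hc.
case: (boolP [exists j : 'I_m.+1, (0 < val j) && Pp Hn m x (k + j)]).
- case/existsP => [[j hj]] /= /andP [j0 Pj].
  case: (ltnP j m) => hjm.
  + move/PpP: Hc => [c1 _]; rewrite chiA in c1.
    have /PpP [d1 d2] := Pj.
    move: c1; rewrite (_ : k + m = k + j + (m - j)); last by lia.
    rewrite d2; last by lia.
    by rewrite (@noclash _ _ _ _ (k + j) (m - j)) //; lia.
  + move/PpP: Hc => [_ c2].
    have := c2 (2 * m - n) ltac:(lia).
    rewrite chiA -A_addn -Pp_addn (_ : k + (2 * m - n) + n = k + j + m); last by lia.
    have /PpP [d1 _] := Pj.
    by rewrite d1 (@noclash _ _ _ _ (k + j) m) //; lia.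
- rewrite negb_exists => /forallP hno.
  move: Hc; rewrite (Pp_ext (x := x)) ?Hp //; first lia.
  move=> j hj; rewrite chiA.
  have hj' : j < m.+1 by lia.
  have := hno (Ordinal hj'); rewrite /=.
  have j0 : (0 < j) = true by lia.
  by rewrite j0 /= => /negbTE ->; rewrite addbF.
Qed.

Lemma Pp_big n Hn m x k : n < m -> @Pp n Hn m x k = false.
Proof.
move=> hnm; apply/negbTE/negP => /PpP [a1 a2].
have := a2 (m - n) ltac:(lia).
by rewrite -A_addn (_ : k + (m - n) + n = k + m) ?a1 //; lia.
Qed.

Theorem corollary3 (n m : nat) (hn : 1 <= n) (hm : 2 <= m) (hdiv : ~~ (m %| n)) :
  (forall x : {ffun 'I_n -> bool}, chi m (chi m x) = x) <-> n <= 2 * m - 1.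
Proof.
have Hn : 0 < n by [].
have hmn : m != n by apply: contraNneq hdiv => ->.
split.
- move=> H; rewrite leqNgt; apply/negP => hlt.
  have h2m : 2 * m != n by apply: contraNneq hdiv => <-; rewrite dvdn_mull.
  pose x := [ffun i : 'I_n => (val i == m) || (val i == 2 * m)].
  have Ax : forall a, a < n -> A Hn x a = (a == m) || (a == 2 * m).
    by move=> a ha; rewrite /A ffunE /= modn_small.
  have P0 : Pp Hn m x 0.
    apply/PpP; split; first by rewrite Ax add0n ?eqxx //; lia.
    move=> j hj; rewrite Ax; last by lia.
    apply/negbTE; apply/negP => /orP [] /eqP; lia.
  have Pm : Pp Hn m x m.
    apply/PpP; split; first by rewrite Ax addnn -mul2n ?eqxx ?orbT //; lia.
    move=> j hj; rewrite Ax; last by lia.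
    apply/negbTE; apply/negP => /orP [] /eqP; lia.
  have Pc : Pp Hn m (chi m x) 0 = false.
    apply/negbTE/negP => /PpP [c1 _]; move: c1.
    rewrite chiA add0n Pm Ax ?eqxx //; lia.
  have := congr1 (fun y => A Hn y 0) (H x); rewrite /= !chiA Pc P0 Ax //.
  have -> : (0 == m) = false by lia.
  by have -> : (0 == 2 * m) = false by lia.
- move=> hle x; apply/ffunP => i.
  rewrite -!(A_ord Hn) !chiA.
  case: (ltngtP m n) => hc.
  + by rewrite key // -addbA addbb addbF.
  + by rewrite !Pp_big // !addbF.
  + by rewrite hc eqxx in hmn.
Qed.
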